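(* Let $L\subseteq\mathbb{Z}^{(\mathbb{N})}$ be a $\mathrm{Sym}$-invariant lattice. For $\mathbf{u}=(u_i)_{i\in\mathbb{N}}\in\mathbb{Z}^{(\mathbb{N})}$ set $s(\mathbf{u})=\sum_{i\in\mathbb{N}}u_i$, and let $s_L=\gcd(s(\mathbf{u})\mid\mathbf{u}\in L)$. Then (i) $s_L\mathbf{e}_1\in L$; (ii) if there exists $\mathbf{u}\in L$ with $s(\mathbf{u})\neq0$, then $s_L\mathbf{e}_1$ belongs to the Graver basis of $L$.
   Context: $\mathbb{N}=\{1,2,\dots\}$. $\mathbb{Z}^{(\mathbb{N})}$ is the group of finitely supported integer sequences with standard basis $\mathbf{e}_i$; a lattice is a subgroup. $\mathrm{Sym}$ is the group of permutations of $\mathbb{N}$ fixing all but finitely many points, acting by $\sigma(\mathbf{e}_i)=\mathbf{e}_{\sigma(i)}$; $L$ is $\mathrm{Sym}$-invariant if $\sigma(L)\subseteq L$ for all $\sigma$. $\mathbf{u}\sqsubseteq\mathbf{v}$ iff $u_iv_i\ge0$ and $|u_i|\le|v_i|$ for all $i$; the Graver basis of $L$ is the set of $\sqsubseteq$-minimal elements of $L\setminus\{\mathbf{0}\}$. *)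

(* Defs.v *)
From mathcomp Require Import all_boot all_order all_algebra.
Set Implicit Arguments. Unset Strict Implicit. Unset Printing Implicit Defensive.
Import Order.TTheory GRing.Theory Num.Theory.
Local Open Scope ring_scope.

(* Vectors are functions nat -> int; the index set N = {1,2,...} is the set of
   positive naturals, so an element of Z^(N) has u 0 = 0 and finite support. *)
Definition vec := nat -> int.

Definition in_ZN (u : vec) : Prop :=
  u 0%N = 0 /\ exists n : nat, forall i : nat, (n <= i)%N -> u i = 0.

Definition e (i : nat) : vec := fun j => if j == i then 1 else 0.

Definition vzero : vec := fun _ => 0.
Definition vsub (u v : vec) : vec := fun i => u i - v i.
Definition vscale (a : int) (u : vec) : vec := fun i => a * u i.

Definition lattice (L : vec -> Prop) : Prop :=
  (forall u, L u -> in_ZN u) /\ L vzero /\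
  (forall u v, L u -> L v -> L (vsub u v)).

Definition is_Sym (sigma tau : nat -> nat) : Prop :=
  sigma 0%N = 0%N /\ cancel sigma tau /\ cancel tau sigma /\
  exists n : nat, forall i : nat, (n <= i)%N -> sigma i = i.

(* sigma(e_i) = e_{sigma i}, extended linearly: (sigma u)_j = u_{sigma^-1 j} *)
Definition act (tau : nat -> nat) (u : vec) : vec := fun j => u (tau j).

Definition sym_invariant (L : vec -> Prop) : Prop :=
  forall sigma tau, is_Sym sigma tau -> forall u, L u -> L (act tau u).

Definition coord_sum (u : vec) (k : int) : Prop :=
  exists n : nat, (forall i : nat, (n <= i)%N -> u i = 0) /\
                  \sum_(i < n) u i = k.

Definition is_sL (L : vec -> Prop) (g : int) : Prop :=
  0 <= g /\
  (forall u k, L u -> coord_sum u k -> (g %| k)%Z) /\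
  (forall d : int, (forall u k, L u -> coord_sum u k -> (d %| k)%Z) ->
                   (d %| g)%Z).

Definition conf_le (u v : vec) : Prop :=
  forall i : nat, 0 <= u i * v i /\ `|u i| <= `|v i|.

Definition in_graver (L : vec -> Prop) (v : vec) : Prop :=
  L v /\ v <> vzero /\
  forall u, L u -> u <> vzero -> conf_le u v -> u = v.

(* Main.v *)
Require Import Defs.
From mathcomp Require Import all_boot all_order all_algebra.
From mathcomp Require Import zify ring.
From Stdlib Require Import Classical FunctionalExtensionality.
Import Order.TTheory GRing.Theory Num.Theory.
Set Implicit Arguments. Unset Strict Implicit. Unset Printing Implicit Defensive.
Local Open Scope ring_scope.

Lemma dvd_le (a b : int) : (a %| b)%Z -> b != 0 -> `|a| <= `|b|.
Proof.
move=> /dvdzP [q ->] nz. rewrite normrM.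
have q0 : q != 0 by apply: contraNneq nz => ->; rewrite mul0r.
have h1 : 0 < `|q| by rewrite normr_gt0.
have h2 : 0 <= `|a| by [].
nia. Qed.

Definition sw (i j x : nat) : nat := if x == i then j else if x == j then i else x.
Ltac noif a := lazymatch a with context [if _ then _ else _] => fail | _ => idtac end.
Ltac eqsplit := repeat (match goal with |- context [(?a == ?b)] => noif a; noif b; case: (a =P b) => ? end; simpl); try lia.

Lemma sw_Sym i j : (0 < i)%N -> (0 < j)%N -> is_Sym (sw i j) (sw i j).
Proof.
move=> hi hj; split; [|split; [|split]].
- rewrite /sw; eqsplit.
- move=> x; rewrite /sw; eqsplit.
- move=> x; rewrite /sw; eqsplit.
- exists (maxn i j).+1 => x hx; rewrite /sw; eqsplit.
Qed.

Section S.
Variable L : vec -> Prop.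
Hypothesis HL : lattice L.
Hypothesis HS : sym_invariant L.

Lemma L_ext u v : L u -> (forall x, u x = v x) -> L v.
Proof. by move=> Lu h; have -> : v = u by apply: functional_extensionality => x; rewrite h. Qed.

Lemma Lsub u v : L u -> L v -> L (vsub u v).
Proof. by case: HL => _ [_ H]; apply: H. Qed.

Lemma w_in u n : L u -> (forall x, (n.+3 <= x)%N -> u x = 0) ->
  L (fun x => if x == n.+2 then u n.+2 else if x == 1%N then - u n.+2 else 0).
Proof.
move=> Lu hu.
have L1 : L (vsub u (act (sw n.+2 n.+3) u)).
  by apply: Lsub => //; exact: (HS (sw_Sym (isT : (0 < n.+2)%N) (isT : (0 < n.+3)%N)) Lu).
have L2 := HS (sw_Sym (isT : (0 < 1)%N) (isT : (0 < n.+3)%N)) L1.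
apply: (L_ext L2) => x.
have uN := hu n.+3 (leqnn _).
rewrite /act /vsub /sw; eqsplit; subst; lia.
Qed.

Lemma sum_in n : forall u, L u -> (forall x, (n.+2 <= x)%N -> u x = 0) ->
  L (vscale (\sum_(i < n.+2) u i) (e 1)).
Proof.
elim: n => [|n IH] u Lu hu.
  apply: (L_ext Lu) => x.
  have u0 : u 0%N = 0 by case: HL => H _; case: (H u Lu).
  rewrite /vscale /e !big_ord_recr big_ord0 /=.
  case: (eqVneq x 1%N) => [->|x1]; first by rewrite u0; lia.
  case: x x1 => [|[|x]] //= _; first by rewrite u0; lia.
  by rewrite hu // mulr0.
set w := (fun x => if x == n.+2 then u n.+2 else if x == 1%N then - u n.+2 else 0).
have Lw : L w by apply: w_in.
have Lu' := Lsub Lu Lw.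
have := IH _ Lu'.
have -> : \sum_(i < n.+2) vsub u w i = \sum_(i < n.+3) u i.
  rewrite /vsub sumrB [in RHS]big_ord_recr /=.
  have -> : \sum_(i < n.+2) w i = - u n.+2.
    rewrite (eq_bigr (fun i : 'I_n.+2 => if (i == 1%N :> nat) then - u n.+2 else 0)).
      by rewrite -big_mkcond (big_ord1_eq _ (fun _ => - u n.+2) 1 n.+2).
    move=> i _; rewrite /w; have -> // : (i == n.+2 :> nat) = false; have := ltn_ord i; lia.
  by rewrite opprK.
apply => x hx; rewrite /vsub /w.
case: eqP => [->|?]; first lia.
case: eqP => [?|?]; first lia.
rewrite hu; [lia| lia].
Qed.

Lemma cs_in u k : L u -> coord_sum u k -> L (vscale k (e 1)).
Proof.
move=> Lu [n [hs hk]].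
have := sum_in Lu (fun x hx => hs x (leq_trans (leqnSn n) (ltnW hx))).
by rewrite !big_ord_recr /= !hs // hk !addr0.
Qed.

Definition H k := L (vscale k (e 1)).

Lemma H0 : H 0.
Proof. apply: (L_ext (proj1 (proj2 HL))) => x; by rewrite /vscale mul0r. Qed.

Lemma Hsub a b : H a -> H b -> H (a - b).
Proof. move=> ha hb; apply: (L_ext (Lsub ha hb)) => x; by rewrite /vsub /vscale mulrBl. Qed.

Lemma Hmul a q : H a -> H (q * a).
Proof.
move=> ha.
have hn : forall n : nat, H (n%:Z * a).
  elim=> [|n IH]; first by rewrite mul0r; exact: H0.
  have -> : (n.+1%:Z * a) = n%:Z * a - (0 - a) by rewrite intS; ring.
  by apply: Hsub => //; apply: Hsub => //; exact: H0.
case: q => n; first exact: hn.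
have -> : Negz n * a = 0 - (n.+1%:Z * a) by rewrite NegzE; ring.
by apply: Hsub; [exact: H0 | exact: hn].
Qed.

Lemma claim g : is_sL L g -> forall h : nat, (0 < h)%N -> H h%:Z -> H g.
Proof.
move=> [g0 [gd gg]] h; elim/ltn_ind: h => h IH hpos Hh.
case: (classic (forall u k, L u -> coord_sum u k -> (h%:Z %| k)%Z)) => P.
  have /dvdzP [q ->] := gg _ P; exact: Hmul.
have [u [k [Lu [cs nd]]]] : exists u k, L u /\ coord_sum u k /\ ~~ (h%:Z %| k)%Z.
  apply: NNPP => C; apply: P => u k Lu cs; case: (boolP (h%:Z %| k)%Z) => // nd.
  by exfalso; apply: C; exists u, k.
have hk := cs_in Lu cs.
have hr : H (k %% h)%Z.
  have -> : (k %% h)%Z = k - (k %/ h)%Z * h%:Z by rewrite {2}(divz_eq k h); ring.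
  by apply: Hsub => //; apply: Hmul.
have r0 : 0 <= (k %% h)%Z by apply: modz_ge0; lia.
have r1 : (k %% h)%Z < h%:Z by apply: ltz_pmod; lia.
have r2 : (k %% h)%Z != 0 by apply: contra nd => /eqP /dvdz_mod0P.
have ea : (absz (k %% h)%Z)%:Z = (k %% h)%Z by rewrite gez0_abs.
apply: (IH (absz (k %% h)%Z)); [lia|lia|by rewrite ea].
Qed.

End S.

Theorem corollary4p7 (L : vec -> Prop) (g : int) :
  lattice L -> sym_invariant L -> is_sL L g ->
  L (vscale g (e 1%N)) /\
  ((exists u k, L u /\ coord_sum u k /\ k <> 0) ->
   in_graver L (vscale g (e 1%N))).
Proof.
move=> HL HS Hg.
have part1 : L (vscale g (e 1%N)).
  case: (classic (exists u k, L u /\ coord_sum u k /\ k <> 0)) => E.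
    case: E => u [k [Lu [cs k0]]].
    have hk := cs_in HL HS Lu cs.
    apply: (claim HL HS Hg (h := absz k)); first lia.
    case: (lerP 0 k) => k0'.
      by rewrite gez0_abs.
    rewrite ltz0_abs //; rewrite -sub0r; apply: Hsub => //; exact: H0.
  have -> : g = 0.
    case: Hg => _ [_ gg]; apply/eqP; rewrite -dvd0z; apply: gg => u k Lu cs.
    rewrite dvd0z; apply/eqP; apply: NNPP => k0; apply: E; by exists u, k.
  exact: H0.
split => // [[u [k [Lu [cs k0]]]]].
case: (Hg) => g0 [gd gg].
have gk := gd _ _ Lu cs.
have gnz : g != 0 by apply: contraTneq gk => ->; rewrite dvd0z; apply/eqP.
split => //; split.
  move=> /(congr1 (fun f => f 1%N)); rewrite /vscale /e /vzero /= mulr1 => g00.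
  by move: gnz; rewrite g00.
move=> v Lv vnz hle.
have vx : forall x, x != 1%N -> v x = 0.
  move=> x x1; have [_ h] := hle x; move: h; rewrite /vscale /e (negbTE x1) mulr0 normr0.
  by rewrite normr_le0 => /eqP.
have v0 : v 0%N = 0 by case: HL => H _; case: (H v Lv).
have csv : coord_sum v (v 1%N).
  exists 2%N; split; first by move=> i hi; apply: vx; lia.
  by rewrite !big_ord_recr big_ord0 /= v0 add0r.
have gv := gd _ _ Lv csv.
have v1 : v 1%N != 0.
  apply/eqP => v10; apply: vnz; apply: functional_extensionality => x.
  rewrite /vzero; case: (eqVneq x 1%N) => [->//|]; exact: vx.
have l1 := dvd_le gv v1.
have [m1 l2] := hle 1%N.
move: m1 l2; rewrite /vscale /e eqxx mulr1 => m1 l2.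
have eq1 : v 1%N = g by nia.
apply: functional_extensionality => x; rewrite /vscale /e.
case: (eqVneq x 1%N) => [->|x1]; first by rewrite mulr1.
by rewrite mulr0 vx.
Qed.
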